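(* Consider the bucketing algorithm described in the context, with arbitrary parameters $r\mid d$, $k=d/r$, $\delta$ with $\delta k\in\mathbb Z$, applied (under a fixed coordinate permutation) to a uniformly random instance of $\mathcal{CP}_{d,\lambda,\gamma}$. Let $(A_0,B_0)$ be the root and, for $i=1,\dots,r$, let $(A_i,B_i)$ be the child of $(A_{i-1},B_{i-1})$ obtained from an independent uniform $\vec z_i\in\mathbb F_2^k$. Then with $p=\binom{k}{\delta k}2^{-k}$, \[\mathbb E\big[|A_i|\cdot|B_i|\big]\le \mathbb E\big[|A_{i-1}|\cdot|B_{i-1}|\big]\,p^2+1\quad(i=1,\dots,r),\] and consequently $\mathbb E[|A_r|\cdot|B_r|]\le 2^{2\lambda d}p^{2r}+r$, the expectation being over the input lists and the choices of the $\vec z_i$.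
   Context: $\mathrm{wt}$ is Hamming weight. For $\vec v\in\mathbb F_2^d$ and $I=\{i_1<\dots<i_m\}\subseteq[d]$, $\vec v_I=(v_{i_1},\dots,v_{i_m})$. For $r\mid d$ and $i\in[r]$, the $i$-th block is $B_{i,r}=[(i-1)\frac dr+1,\ i\frac dr]$. Problem $\mathcal{CP}_{d,\lambda,\gamma}$ (uniform version): two lists $L_1=(\vec v_i)_{i\in[2^{\lambda d}]}$, $L_2=(\vec w_i)_{i\in[2^{\lambda d}]}$ of vectors in $\mathbb F_2^d$, all entries independent and uniformly random, except for one planted pair $(\vec x,\vec y)\in L_1\times L_2$ with $\mathrm{wt}(\vec x+\vec y)=\gamma d$; for every $i,j$ the vectors $\vec v_i,\vec w_j$ are independent. Bucketing step of the algorithm: the root node is $(A_0,B_0)=(L_1,L_2)$; a child of a node $(A,B)$ at level $i-1$ determined by $\vec z\in\mathbb F_2^k$ is $(A',B')$ with $A'=\{\vec v\in A:\mathrm{wt}(\vec v_{B_{i,r}}+\vec z)=\delta k\}$ and $B'=\{\vec w\in B:\mathrm{wt}(\vec w_{B_{i,r}}+\vec z)=\delta k\}$. *)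

(* Defs.v *)
From HB Require Import structures.
From mathcomp Require Import all_boot all_order all_algebra all_fingroup.
From mathcomp Require Import all_classical all_reals all_analysis.
Set Implicit Arguments. Unset Strict Implicit. Unset Printing Implicit Defensive.
Import Order.TTheory GRing.Theory Num.Theory.

Definition vec (n : nat) := 'rV['F_2]_n.

Definition wt (n : nat) (v : vec n) : nat := #|[set j : 'I_n | v ord0 j != 0%R]|.

(* Dimension d = r * k; the i-th block (0-based i : 'I_r) of v consists of
   the coordinates i*k, ..., i*k + k - 1 (mxvec_index i j has value i*k + j). *)
Definition blk (r k : nat) (v : vec (r * k)) (i : 'I_r) : vec k :=
  (\row_(j < k) v ord0 (mxvec_index i j))%R.

Definition permv (n : nat) (pi : 'S_n) (v : vec n) : vec n :=
  (\row_(j < n) v ord0 (pi j))%R.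

(* One bucketing step: keep the indices j in A whose (permuted) vector's
   t-th block is at distance w = delta*k from z. *)
Definition child (r k N w : nat) (pi : 'S_(r * k))
  (L : {ffun 'I_N -> vec (r * k)}) (A : {set 'I_N}) (t : 'I_r) (z : vec k)
  : {set 'I_N} :=
  [set j in A | wt (blk (permv pi (L j)) t + z)%R == w].

Fixpoint node (r k N w : nat) (pi : 'S_(r * k))
  (L : {ffun 'I_N -> vec (r * k)}) (zs : {ffun 'I_r -> vec k}) (i : nat)
  : {set 'I_N} :=
  match i with
  | 0 => [set: 'I_N]
  | i'.+1 =>
      if (insub i' : option 'I_r) is Some t
      then child w pi L (node w pi L zs i') t (zs t)
      else node w pi L zs i'
  end.

(* Sample space: the two lists, the (uniformly random) position (a,b) of the
   planted pair, and the choices z_1..z_r. *)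
Definition Omega (r k N : nat) : finType :=
  ({ffun 'I_N -> vec (r * k)} * {ffun 'I_N -> vec (r * k)} * ('I_N * 'I_N)
    * {ffun 'I_r -> vec k})%type.

(* Uniform CP_{d,lambda,gamma} instance together with uniform z's: the uniform
   distribution on Omega conditioned on wt(L1 a + L2 b) = g (= gamma d). *)
Definition good (r k N g : nat) : {set Omega r k N} :=
  [set om : Omega r k N |
     wt (om.1.1.1 om.1.2.1 + om.1.1.2 om.1.2.2)%R == g].

Definition Expect (R : realType) (r k N g : nat) (X : Omega r k N -> nat) : R :=
  ((\sum_(om in good r k N g) X om)%:R / (#|good r k N g|)%:R)%R.

Definition prodsize (r k N w : nat) (pi : 'S_(r * k)) (i : nat)
  (om : Omega r k N) : nat :=
  (#|node w pi om.1.1.1 om.2 i| * #|node w pi om.1.1.2 om.2 i|)%N.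

(* Main.v *)
Require Import Defs.
From HB Require Import structures.
From mathcomp Require Import all_boot all_order all_algebra all_fingroup.
From mathcomp Require Import all_classical all_reals all_analysis.
From mathcomp Require Import ring lra zify.
Import Order.TTheory GRing.Theory Num.Theory.
Local Open Scope ring_scope.

Module Helpers.
Set Implicit Arguments. Unset Strict Implicit. Unset Printing Implicit Defensive.

Lemma f2_dbl (x : 'F_2) : x + x = 0.
Proof. by case: x => [[|[|//]]] ?; apply/val_inj. Qed.

Lemma addvv n (v : vec n) : v + v = 0.
Proof. by apply/rowP => j; rewrite !mxE f2_dbl. Qed.

Lemma addv4 n (u v c d : vec n) : u + c + d + (v + d + c) = u + v.
Proof.
rewrite -!addrA; congr (u + _).
by rewrite (addrC v (d + c)) !addrA -(addrA c d d) (addvv d) addr0 (addvv c) add0r.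
Qed.

Lemma permvD n (pi : 'S_n) (u v : vec n) : permv pi (u + v) = permv pi u + permv pi v.
Proof. by apply/rowP => j; rewrite !mxE. Qed.
Lemma permv0 n (pi : 'S_n) : permv pi 0 = 0.
Proof. by apply/rowP => j; rewrite !mxE. Qed.
Lemma blkD r k (u v : vec (r * k)) t : blk (u + v) t = blk u t + blk v t.
Proof. by apply/rowP => j; rewrite !mxE. Qed.
Lemma blk0 r k t : blk (0 : vec (r * k)) t = 0.
Proof. by apply/rowP => j; rewrite !mxE. Qed.

Definition ev r k (pi : 'S_(r * k)) (t : 'I_r) (x : vec k) : vec (r * k) :=
  permv (pi^-1)%g (mxvec (\matrix_(s, j) if s == t then x ord0 j else 0)).

Lemma blk_ev r k (pi : 'S_(r * k)) t x s :
  blk (permv pi (ev pi t x)) s = if s == t then x else 0.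
Proof.
apply/rowP => j; rewrite !mxE permK mxvecE mxE.
by case: eqP => //; rewrite mxE.
Qed.

Lemma blk_c r k (pi : 'S_(r * k)) t x s (b : bool) : s != t ->
  blk (permv pi (if b then ev pi t x else 0)) s = 0.
Proof. by move=> st; case: b; rewrite ?blk_ev ?(negbTE st) // permv0 blk0. Qed.

Lemma node_ext r k N w (pi : 'S_(r * k)) (L L' : {ffun 'I_N -> vec (r * k)}) zs n :
  (forall m (s : 'I_r), (s < n)%N -> blk (permv pi (L m)) s = blk (permv pi (L' m)) s) ->
  node w pi L zs n = node w pi L' zs n.
Proof.
elim: n => [//|n IH] H /=.
rewrite IH; last by move=> m s sn; apply: H; apply: ltnW.
case: insubP => [s _ Es|//].
apply/setP => m; rewrite !inE H //. by rewrite Es.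
Qed.

Lemma node_S r k N w (pi : 'S_(r * k)) (L : {ffun 'I_N -> vec (r * k)}) zs (t : 'I_r) :
  node w pi L zs t.+1 = child w pi L (node w pi L zs t) t (zs t).
Proof. by rewrite /= valK. Qed.

Lemma card_setE N (B : {set 'I_N}) : (\sum_(l : 'I_N) ((l \in B) : nat))%N = #|B|.
Proof. by rewrite -sum1_card [RHS]big_mkcond /=; apply: eq_bigr => l _; case: (l \in B). Qed.

Lemma card_mul N (A B : {set 'I_N}) :
  (#|A| * #|B| = \sum_(j : 'I_N) \sum_(l : 'I_N) ((j \in A) && (l \in B) : nat))%N.
Proof.
transitivity (\sum_(j : 'I_N) (if j \in A then #|B| else 0))%N.
  by rewrite -big_mkcond /= sum_nat_const.
apply: eq_bigr => j _; case: (j \in A) => /=; last by rewrite big1.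
by rewrite card_setE.
Qed.

Lemma card_vec k : #|{: vec k}| = (2 ^ k)%N.
Proof. by rewrite card_mx card_Fp // mul1n. Qed.

Lemma cnt_sets k w : (\sum_(A : {set 'I_k}) (#|A| == w : nat))%N = 'C(k, w).
Proof.
have := card_draws 'I_k w; rewrite card_ord => <-.
rewrite -sum1_card [RHS]big_mkcond /=.
by apply: eq_bigr => A _; rewrite inE; case: (_ == _).
Qed.

Lemma cnt_wt k w : (\sum_(x : vec k) (wt x == w : nat))%N = 'C(k, w).
Proof.
pose h (A : {set 'I_k}) : vec k := \row_j (j \in A)%:R.
pose g (x : vec k) : {set 'I_k} := [set j | x ord0 j != 0].
have hg : cancel h g.
  move=> A; apply/setP => j; rewrite inE mxE.
  by case: (j \in A); rewrite ?oner_neq0 ?eqxx.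
have gh : cancel g h.
  move=> x; apply/rowP => j; rewrite mxE inE.
  by case: (x ord0 j) => [[|[|//]]] ?; apply/val_inj.
rewrite (reindex h); last by exists g => y _; [apply: hg | apply: gh].
have wh A : wt (h A) = #|A|.
  rewrite /wt; apply: eq_card => j; rewrite inE mxE.
  by case: (j \in A); rewrite ?oner_neq0 ?eqxx.
under eq_bigr do rewrite wh.
exact: cnt_sets.
Qed.

Lemma cnt_wt_shift k w (c : vec k) : (\sum_(x : vec k) (wt (c + x)%R == w : nat))%N = 'C(k, w).
Proof. by rewrite -(cnt_wt k w) [RHS](reindex_inj (addrI c)). Qed.

Lemma bin_le k w : ('C(k, w) <= 2 ^ k)%N.
Proof.
rewrite -cnt_wt -card_vec -sum1_card.
by apply: leq_sum => x _; case: (_ == _).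
Qed.

Lemma sum_andb (T U : finType) (P : pred T) (Q : pred U) :
  (\sum_(x : T) \sum_(y : U) ((P x && Q y) : nat) =
   (\sum_(x : T) (P x : nat)) * (\sum_(y : U) (Q y : nat)))%N.
Proof.
rewrite big_distrlr /=; apply: eq_bigr => x _; apply: eq_bigr => y _.
by case: (P x); case: (Q y).
Qed.

Lemma addv2 n (u c d : vec n) : u + c + d + c + d = u.
Proof. by rewrite -(addrA (u + c + d) c d) -(addrA u c d) -addrA addvv addr0. Qed.

Section Core.
Variables (r k N w g : nat) (pi : 'S_(r * k)) (j l : 'I_N) (t : 'I_r).

Definition Tr (x y : vec k) (om : Omega r k N) : Omega r k N :=
  (([ffun m => om.1.1.1 m + (if m == j then ev pi t x else 0)
       + (if (m == om.1.2.1) && (l == om.1.2.2) then ev pi t y else 0)],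
    [ffun m => om.1.1.2 m + (if m == l then ev pi t y else 0)
       + (if (m == om.1.2.2) && (j == om.1.2.1) then ev pi t x else 0)]),
   om.1.2, om.2).

Lemma TrK x y : cancel (Tr x y) (Tr x y).
Proof.
case=> [[[L1 L2] [a b]] zs] /=; rewrite /Tr /=.
by congr (_, _, _, _); apply/ffunP => m; rewrite !ffunE addv2.
Qed.

Lemma good_Tr x y om : (Tr x y om \in good r k N g) = (om \in good r k N g).
Proof.
case: om => [[[L1 L2] [a b]] zs]; rewrite !inE /= !ffunE !eqxx /=.
by rewrite (eq_sym b l) (eq_sym j a) addv4.
Qed.

Lemma blk_Tr_other (L : {ffun 'I_N -> vec (r * k)}) m (s : 'I_r) (b1 b2 : bool) u v :
  s != t ->
  blk (permv pi (L m + (if b1 then ev pi t u else 0) + (if b2 then ev pi t v else 0))) s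
  = blk (permv pi (L m)) s.
Proof. by move=> st; rewrite !permvD !blkD !blk_c // !addr0. Qed.

Definition Fp (om : Omega r k N) : bool :=
  (j \in node w pi om.1.1.1 om.2 t) && (l \in node w pi om.1.1.2 om.2 t).

Definition Gp (om : Omega r k N) : bool :=
  (wt (blk (permv pi (om.1.1.1 j)) t + om.2 t) == w) &&
  (wt (blk (permv pi (om.1.1.2 l)) t + om.2 t) == w).

Definition neqp (om : Omega r k N) : bool := om.1.2 != (j, l).

Lemma Fp_Tr x y om : Fp (Tr x y om) = Fp om.
Proof.
case: om => [[[L1 L2] [a b]] zs]; rewrite /Fp /Tr /=.
have st (s : 'I_r) : (s < t)%N -> s != t.
  by move=> H; apply/eqP => E; move: H; rewrite E ltnn.
congr (_ && _); congr (_ \in _).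
  by rewrite (@node_ext r k N w pi _ L1 zs t) // => m s H; rewrite ffunE blk_Tr_other // st.
by rewrite (@node_ext r k N w pi _ L2 zs t) // => m s H; rewrite ffunE blk_Tr_other // st.
Qed.

Lemma Gp_Tr x y om : neqp om ->
  Gp (Tr x y om) = (wt (blk (permv pi (om.1.1.1 j)) t + om.2 t + x) == w) &&
                   (wt (blk (permv pi (om.1.1.2 l)) t + om.2 t + y) == w).
Proof.
case: om => [[[L1 L2] [a b]] zs]; rewrite /neqp /Gp /Tr /= !ffunE !eqxx /=.
rewrite xpair_eqE negb_and => H.
have -> : (j == a) && (l == b) = false by rewrite (eq_sym j a) (eq_sym l b); case/orP: H => /negbTE ->; rewrite ?andbF.
have -> : (l == b) && (j == a) = false by rewrite andbC (eq_sym j a) (eq_sym l b); case/orP: H => /negbTE ->; rewrite ?andbF.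
by rewrite !permvD !permv0 !blkD !blk0 !blk_ev eqxx !addr0 !(addrAC _ _ (zs t)).
Qed.

Lemma core :
  ((2 ^ k * 2 ^ k) * \sum_(om in good r k N g) ((neqp om && Fp om && Gp om) : nat) =
   'C(k, w) * 'C(k, w) * \sum_(om in good r k N g) ((neqp om && Fp om) : nat))%N.
Proof.
have step x y : (\sum_(om in good r k N g) ((neqp om && Fp om && Gp om) : nat) =
  \sum_(om in good r k N g) ((neqp om && Fp om &&
     ((wt (blk (permv pi (om.1.1.1 j)) t + om.2 t + x)%R == w) &&
      (wt (blk (permv pi (om.1.1.2 l)) t + om.2 t + y)%R == w))) : nat))%N.
  rewrite (reindex_inj (can_inj (TrK x y))) /=.
  apply: eq_big => om; first by rewrite good_Tr.
  move=> _; have -> : neqp (Tr x y om) = neqp om by [].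
  by rewrite Fp_Tr; case Hn: (neqp om) => //=; rewrite Gp_Tr.
have -> : ((2 ^ k * 2 ^ k) * \sum_(om in good r k N g) ((neqp om && Fp om && Gp om) : nat)
  = \sum_(x : vec k) \sum_(y : vec k)
    \sum_(om in good r k N g) ((neqp om && Fp om && Gp om) : nat))%N.
  by rewrite !sum_nat_const card_vec mulnA.
rewrite (eq_bigr _ (fun x _ => eq_bigr _ (fun y _ => step x y))).
under eq_bigr do rewrite exchange_big.
rewrite exchange_big /= big_distrr /=.
apply: eq_bigr => om _.
case: (neqp om && Fp om) => /=; last by rewrite muln0 big1 // => x _; rewrite big1.
rewrite muln1 sum_andb.
by rewrite !(@cnt_wt_shift k w).
Qed.

End Core.

Section Step.
Variables (r k N w g : nat) (pi : 'S_(r * k)).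

Definition Ssum (n : nat) : nat :=
  (\sum_(om in good r k N g) prodsize w pi n om)%N.

Lemma sum_eq1 (a : 'I_N) : (\sum_(j : 'I_N) ((a == j) : nat))%N = 1%N.
Proof.
rewrite (bigD1 a) //= eqxx big1 // => j /negbTE.
by rewrite eq_sym => ->.
Qed.

Lemma swap3 (f : Omega r k N -> 'I_N -> 'I_N -> nat) :
  (\sum_(j : 'I_N) \sum_(l : 'I_N) \sum_(om in good r k N g) f om j l =
   \sum_(om in good r k N g) \sum_(j : 'I_N) \sum_(l : 'I_N) f om j l)%N.
Proof. by rewrite [RHS]exchange_big; apply: eq_bigr => j _; rewrite exchange_big. Qed.

Lemma Ssum_expand n : Ssum n =
  (\sum_(om in good r k N g) \sum_(j : 'I_N) \sum_(l : 'I_N)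
     ((j \in node w pi om.1.1.1 om.2 n) && (l \in node w pi om.1.1.2 om.2 n) : nat))%N.
Proof. by apply: eq_bigr => om _; rewrite /prodsize card_mul. Qed.

Lemma step_nat (t : 'I_r) :
  (2 ^ k * 2 ^ k * Ssum t.+1 <= 2 ^ k * 2 ^ k * #|good r k N g| + 'C(k, w) * 'C(k, w) * Ssum t)%N.
Proof.
set K := (2 ^ k * 2 ^ k)%N; set C := 'C(k, w).
have h1 : Ssum t.+1 = (\sum_(om in good r k N g) \sum_(j : 'I_N) \sum_(l : 'I_N)
     ((Fp w pi j l t om && Gp w pi j l t om) : nat))%N.
  rewrite Ssum_expand; apply: eq_bigr => om _; apply: eq_bigr => j _; apply: eq_bigr => l _.
  by rewrite !node_S /child !inE andbACA.
have h2 : (Ssum t.+1 <= #|good r k N g| + \sum_(j : 'I_N) \sum_(l : 'I_N)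
     \sum_(om in good r k N g) ((neqp j l om && Fp w pi j l t om && Gp w pi j l t om) : nat))%N.
  rewrite h1.
  apply: (@leq_trans (\sum_(om in good r k N g) \sum_(j : 'I_N) \sum_(l : 'I_N)
     ((om.1.2 == (j, l) : nat) + (neqp j l om && Fp w pi j l t om && Gp w pi j l t om : nat)))%N).
    apply: leq_sum => om _; apply: leq_sum => j _; apply: leq_sum => l _.
    rewrite /neqp; case: (om.1.2 == (j, l)) => /=; first by case: (_ && _).
    by rewrite add0n.
  rewrite (eq_bigr _ (fun om _ => eq_bigr _ (fun j _ => big_split _ _ _ _ _))).
  rewrite (eq_bigr _ (fun om _ => big_split _ _ _ _ _)) big_split /=.
  rewrite -sum1_card; apply: leq_add.
    apply: eq_leq; apply: eq_bigr => om _.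
    case: om.1.2 => a b.
    rewrite (eq_bigr _ (fun j _ => eq_bigr _ (fun l _ => congr1 nat_of_bool (xpair_eqE a j b l)))).
    by rewrite sum_andb !sum_eq1.
  apply: eq_leq; rewrite exchange_big /=.
  by apply: eq_bigr => j _; rewrite exchange_big.
have h3 : (K * \sum_(j : 'I_N) \sum_(l : 'I_N)
     \sum_(om in good r k N g) ((neqp j l om && Fp w pi j l t om && Gp w pi j l t om) : nat)
     <= C * C * Ssum t)%N.
  apply: (@leq_trans (\sum_(j : 'I_N) \sum_(l : 'I_N) (C * C *
     \sum_(om in good r k N g) (Fp w pi j l t om : nat))))%N.
    rewrite big_distrr; apply: leq_sum => j _; rewrite big_distrr; apply: leq_sum => l _.
    apply: (leq_trans (eq_leq (@core r k N w g pi j l t))); rewrite leq_mul2l; apply/orP; right.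
    by apply: leq_sum => om _; case: (neqp _ _ _).
  apply: eq_leq; rewrite Ssum_expand -swap3 big_distrr /=.
  apply: eq_bigr => j _; rewrite big_distrr /=.
  by apply: eq_bigr => l _.
apply: (@leq_trans (K * (#|good r k N g| + \sum_(j : 'I_N) \sum_(l : 'I_N)
     \sum_(om in good r k N g) ((neqp j l om && Fp w pi j l t om && Gp w pi j l t om) : nat))))%N.
  by rewrite leq_mul2l h2 orbT.
by rewrite mulnDr leq_add2l.
Qed.

End Step.

Lemma real_step (R : realFieldType) (a b G c q : R) : 0 < G -> 0 < q ->
  q * q * a <= q * q * G + c * c * b -> a / G <= b / G * (c / q) ^+ 2 + 1.
Proof.
move=> G0 q0 h; rewrite ler_pdivrMr //.
have -> : (b / G * (c / q) ^+ 2 + 1) * G = (q * q * G + c * c * b) / (q * q).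
  by field; rewrite !gt_eqF.
by rewrite ler_pdivlMr ?mulr_gt0 // mulrC.
Qed.

Lemma real_ind (R : realFieldType) (Ei Ei1 e0 P p2 i : R) :
  Ei1 <= Ei * p2 + 1 -> Ei <= e0 * P + i -> 0 <= p2 -> p2 <= 1 -> 0 <= i ->
  Ei1 <= e0 * (P * p2) + (i + 1).
Proof. move=> h1 h2 h3 h4 h5; nra. Qed.

End Helpers.
Import Helpers.

Theorem mainTheorem6 (R : realType) (r k N : nat) (lam gam del : R)
  (g w : nat) (pi : 'S_(r * k)) :
  (0 < r)%N ->
  N%:R = 2 `^ (lam * (r * k)%:R) ->
  0 <= gam <= 1 -> gam * (r * k)%:R = g%:R ->
  del * k%:R = w%:R ->
  let p : R := 'C(k, w)%:R / 2 ^+ k in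
  let E (i : nat) : R := @Expect R r k N g (@prodsize r k N w pi i) in
  (forall i : nat, (1 <= i <= r)%N -> E i <= E i.-1 * p ^+ 2 + 1) /\
  E r <= 2 `^ (2 * lam * (r * k)%:R) * p ^+ (2 * r) + r%:R.
Proof.
move=> r0 HN _ _ _ p E.
set G := #|good r k N g|.
have Edef i : E i = (@Ssum r k N w g pi i)%:R / G%:R by [].
have p0 : 0 <= p by rewrite /p divr_ge0 ?exprn_ge0 ?ler0n.
have p1 : p <= 1.
  by rewrite /p ler_pdivrMr ?exprn_gt0 // mul1r -natrX ler_nat bin_le.
have claim1 : forall i, (1 <= i <= r)%N -> E i <= E i.-1 * p ^+ 2 + 1.
  move=> i /andP[i1 ir].
  have ti : (i.-1 < r)%N by lia.
  pose t := Ordinal ti.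
  have iE : i = t.+1 by rewrite /= prednK.
  rewrite !Edef iE /=.
  have [G0|Gpos] := eqVneq G 0%N.
    by rewrite G0 mulr0n invr0 !mulr0 mul0r add0r ler01.
  apply: real_step; first by rewrite ltr0n lt0n.
    by rewrite exprn_gt0.
  have := @step_nat r k N w g pi t; rewrite -(ler_nat R) !natrD !natrM !natrX.
  by [].
have E0 : E 0 <= N%:R ^+ 2.
  rewrite Edef.
  have -> : @Ssum r k N w g pi 0 = (G * (N * N))%N.
    rewrite /Ssum; under eq_bigr => om _ do rewrite /prodsize /= cardsT card_ord.
    by rewrite sum_nat_const.
  have [G0|Gpos] := eqVneq G 0%N.
    by rewrite G0 mul0n mul0r exprn_ge0.
  by rewrite natrM [G%:R * _]mulrC mulfK ?pnatr_eq0 // natrM expr2.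
have claim2 : forall i, (i <= r)%N -> E i <= E 0 * p ^+ (2 * i) + i%:R.
  elim=> [|i IH] Hi; first by rewrite muln0 expr0 mulr1 addr0.
  have h := claim1 i.+1 (Hi).
  rewrite mulnS exprD [p ^+ 2 * _]mulrC -natr1.
  apply: real_ind h (IH (ltnW Hi)) _ _ _.
  - by rewrite exprn_ge0.
  - by rewrite expr_le1.
  - by rewrite ler0n.
split => //.
have hN2 : 2 `^ (2 * lam * (r * k)%:R) = N%:R ^+ 2 :> R.
  by rewrite -mulrA [2 * _]mulrC powRrM -HN powR_mulrn.
rewrite hN2; apply: (le_trans (claim2 r (leqnn r))).
by rewrite lerD2r ler_wpM2r // exprn_ge0.
Qed.
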